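(* Let an $m$-stage explicit Runge--Kutta method with coefficients $(A,b)$ and step-size coefficient $\gamma=\gamma(A,b)$ be given. Consider a problem of the form $$u_k'(t)=q_k(u(t),t)\,\frac{u_{k-1}(t)-u_k(t)}{\Delta x},\quad k=1,\dots,N,\qquad u_0:=u_N,\qquad u_k(t_0)=u_k^0,$$ with $N\ge1$, $\Delta x>0$, real initial data $u^0\in\mathbb{R}^N$ and functions $q_k:\mathbb{R}^N\times\mathbb{R}\to\mathbb{R}$. Suppose the time step $\Delta t$ and the mesh width $\Delta x$ are chosen so that $$0\le \Delta t\,\frac{q_k(u,t)}{\Delta x}\le\gamma,\qquad k=1,\dots,N,$$ for all values $u,t$. Let $u_{\max}=\max_k u_k^0$ and $u_{\min}=\min_k u_k^0$. Then the numerical solution $u^n$ produced by the Runge--Kutta method applied to this problem satisfies $u^n_k\in[u_{\min},u_{\max}]$ for all $k$ and all $n\ge0$.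
   Context: An explicit Runge--Kutta (ERK) method with $m$ stages is given by a strictly lower-triangular matrix $A=(a_{ij})\in\mathbb{R}^{m\times m}$ and a vector $b\in\mathbb{R}^m$; its nodes are $c_i=\sum_j a_{ij}$. Applied to the ODE system above with step $\Delta t$ and $t_n=t_0+n\Delta t$, one step from $u^n\in\mathbb{R}^N$ is $$y^i_k=u^n_k+\sum_{j=1}^{i-1}a_{ij}\xi^j_k\,(y^j_{k-1}-y^j_k),\ i=1,\dots,m,\qquad u^{n+1}_k=u^n_k+\sum_{i=1}^m b_i\xi^i_k\,(y^i_{k-1}-y^i_k),$$ with $\xi^j_k=\frac{\Delta t}{\Delta x}q_k(y^j,t_n+c_j\Delta t)$ and indices taken periodically ($y_0:=y_N$). Positivity polynomials: treat the $\xi^j_\ell$ ($1\le j\le m$, $\ell\in\mathbb{Z}$) as independent variables and apply the same recursion formally on the infinite grid $\ell\in\mathbb{Z}$; then $u^{n+1}_k=\sum_{i=0}^m P_i(\xi)\,u^n_{k-i}$, where $P_0,\dots,P_m$ are polynomials in the $m(m+1)/2$ variables $\xi^j_\ell$, $1\le j\le m$, $k-(m-j)\le\ell\le k$, which (written in terms of the relative variables $\xi^j_{k-s}$) depend only on $(A,b)$ and not on $k$. The (positivity) step-size coefficient is $$\gamma(A,b):=\sup\{\delta\ge0:\ P_i(\xi)\ge0\ \text{for each }0\le i\le m\text{ and all }\xi\in[0,\delta]^{m(m+1)/2}\},$$ with $\gamma(A,b):=0$ if this set is empty. *)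

(* Defs.v *)
From Stdlib Require Import Reals ZArith List Arith.
From Coquelicot Require Import Rbar Lub.
Open Scope R_scope.

Fixpoint sumR (n : nat) (f : nat -> R) : R :=
  match n with
  | O => 0
  | S n' => sumR n' f + f n'
  end.

(* Stages are numbered
   0..m-1 (paper: 1..m).  [F j y k] is the increment xi^j_k (y_{k-1} - y_k)
   of stage j evaluated on stage vector y.  Only a_{ij} with j < i is used
   (A strictly lower triangular). *)
Fixpoint erk_stages {I : Type} (A : nat -> nat -> R)
    (F : nat -> (I -> R) -> I -> R) (u : I -> R) (n : nat) : list (I -> R) :=
  match n with
  | O => nil
  | S i =>
      let l := erk_stages A F u i in
      l ++ (fun k => u k + sumR i (fun j => A i j * F j (nth j l u) k)) :: nil
  end.

Definition erk_step {I : Type} (m : nat) (A : nat -> nat -> R) (b : nat -> R)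
    (F : nat -> (I -> R) -> I -> R) (u : I -> R) : I -> R :=
  let ys := erk_stages A F u m in
  fun k => u k + sumR m (fun i => b i * F i (nth i ys u) k).

Definition node (A : nat -> nat -> R) (i : nat) : R := sumR i (fun j => A i j).

(* Positivity polynomial P_i evaluated at xi (xi j l = xi^{j}_l on the
   infinite grid Z), taking k = 0: coefficient of u_{-i} in u^{n+1}_0,
   obtained by feeding the unit vector at -i (the map is linear in u). *)
Definition pos_poly (m : nat) (A : nat -> nat -> R) (b : nat -> R)
    (i : nat) (xi : nat -> Z -> R) : R :=
  erk_step m A b (fun j y l => xi j l * (y (l - 1)%Z - y l))
    (fun l => if Z.eqb l (- Z.of_nat i)%Z then 1 else 0) 0%Z.

Definition pos_ok (m : nat) (A : nat -> nat -> R) (b : nat -> R) (d : R) : Prop :=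
  0 <= d /\
  forall xi : nat -> Z -> R,
    (forall j l, 0 <= xi j l <= d) ->
    forall i, (i <= m)%nat -> 0 <= pos_poly m A b i xi.

Definition gamma (m : nat) (A : nat -> nat -> R) (b : nat -> R) : Rbar :=
  Lub_Rbar (pos_ok m A b).

Definition prevN (N k : nat) : nat := if Nat.eqb k 1 then N else (k - 1)%nat.

Fixpoint rk_sol (m : nat) (A : nat -> nat -> R) (b : nat -> R) (N : nat)
    (dx dt t0 : R) (q : nat -> (nat -> R) -> R -> R) (u0 : nat -> R)
    (n : nat) : nat -> R :=
  match n with
  | O => u0
  | S n' =>
      let tn := t0 + INR n' * dt in
      erk_step m A b
        (fun j y k => dt / dx * q k y (tn + node A j * dt) * (y (prevN N k) - y k))
        (rk_sol m A b N dx dt t0 q u0 n')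
  end.

Fixpoint umax_of (N : nat) (u : nat -> R) : R :=
  match N with
  | O => u 1%nat
  | S O => u 1%nat
  | S N' => Rmax (umax_of N' u) (u N)
  end.
Fixpoint umin_of (N : nat) (u : nat -> R) : R :=
  match N with
  | O => u 1%nat
  | S O => u 1%nat
  | S N' => Rmin (umin_of N' u) (u N)
  end.

(* Main.v *)
Require Import Defs.
From Stdlib Require Import Reals ZArith List Arith Lra Lia Classical FunctionalExtensionality.
From Coquelicot Require Import Rbar Lub.
Open Scope R_scope.

Lemma sumR_ext n f g : (forall i, (i < n)%nat -> f i = g i) -> sumR n f = sumR n g.
Proof. induction n; simpl; intros H; auto. rewrite IHn by (intros; apply H; lia). rewrite H by lia. reflexivity. Qed.

Lemma sumR_lin n a c f g : sumR n (fun i => a * f i + c * g i) = a * sumR n f + c * sumR n g.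
Proof. induction n; simpl; [ring|rewrite IHn; ring]. Qed.

Lemma sumR_zero n : sumR n (fun _ => 0) = 0.
Proof. induction n; simpl; [ring|rewrite IHn; ring]. Qed.

Lemma sumR_nonneg n f : (forall i, (i < n)%nat -> 0 <= f i) -> 0 <= sumR n f.
Proof. induction n; simpl; intros H; [lra|]. pose proof (H n ltac:(lia)). pose proof (IHn ltac:(intros; apply H; lia)). lra. Qed.

Lemma sumR_le_term n f i : (forall i, (i < n)%nat -> 0 <= f i) -> (i < n)%nat -> f i <= sumR n f.
Proof. induction n; simpl; intros H Hi; [lia|].
  assert (0 <= sumR n f) by (apply sumR_nonneg; intros; apply H; lia).
  destruct (Nat.eq_dec i n) as [->|]; [lra|].
  pose proof (IHn ltac:(intros; apply H; lia) ltac:(lia)). pose proof (H n ltac:(lia)). lra. Qed.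

Lemma sumR_single n f i0 : (i0 < n)%nat -> (forall i, (i < n)%nat -> i <> i0 -> f i = 0) -> sumR n f = f i0.
Proof. induction n; simpl; intros Hi H; [lia|].
  destruct (Nat.eq_dec i0 n) as [->|].
  - rewrite (sumR_ext n f (fun _ => 0)), sumR_zero; [ring|]. intros; apply H; lia.
  - rewrite IHn by (try intros; try apply H; lia). rewrite (H n) by lia. ring. Qed.

Lemma sumR_convex n c p lo hi : (forall i, (i < n)%nat -> 0 <= p i) -> (forall i, (i < n)%nat -> lo <= c i <= hi) ->
  lo * sumR n p <= sumR n (fun i => c i * p i) <= hi * sumR n p.
Proof. induction n; simpl; intros H1 H2; [lra|].
  destruct IHn as [A1 A2]; [intros; apply H1; lia|intros; apply H2; lia|].
  pose proof (H1 n ltac:(lia)). pose proof (H2 n ltac:(lia)). split; nra. Qed.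

Definition stage {I : Type} A F (u : I -> R) j := nth j (erk_stages A F u (S j)) u.

Lemma erk_stages_length {I : Type} A F (u : I -> R) n : length (erk_stages A F u n) = n.
Proof. induction n; simpl; auto. rewrite length_app, IHn; simpl; lia. Qed.

Lemma stages_prefix {I : Type} A F (u : I -> R) n j : (j < n)%nat -> nth j (erk_stages A F u n) u = stage A F u j.
Proof.
  induction n; intros H; [lia|].
  destruct (Nat.eq_dec j n) as [->|Hne]; [reflexivity|].
  simpl. rewrite app_nth1 by (rewrite erk_stages_length; lia). apply IHn; lia.
Qed.

Lemma stage_eq {I : Type} A F (u : I -> R) j :
  stage A F u j = fun k => u k + sumR j (fun j' => A j j' * F j' (stage A F u j') k).
Proof.
  unfold stage at 1. simpl. rewrite app_nth2 by (rewrite erk_stages_length; lia).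
  rewrite erk_stages_length, Nat.sub_diag. simpl. apply functional_extensionality; intro k. f_equal.
  apply sumR_ext; intros i Hi. rewrite stages_prefix by lia. reflexivity.
Qed.

Lemma step_eq {I : Type} m A b F (u : I -> R) k :
  erk_step m A b F u k = u k + sumR m (fun i => b i * F i (stage A F u i) k).
Proof. unfold erk_step. cbv beta zeta. f_equal. apply sumR_ext; intros; rewrite stages_prefix; auto. Qed.

Lemma stage_ext_on {I : Type} A F G (u : I -> R) j :
  (forall j', (j' < j)%nat -> forall k, F j' (stage A F u j') k = G j' (stage A F u j') k) ->
  stage A F u j = stage A G u j.
Proof.
  induction j as [j IH] using lt_wf_ind. intros H.
  rewrite (stage_eq A F u j), (stage_eq A G u j). apply functional_extensionality; intro k. f_equal.
  apply sumR_ext; intros i Hi. rewrite H by lia. rewrite IH; auto. intros; apply H; lia.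
Qed.

Lemma step_ext_on {I : Type} m A b F G (u : I -> R) k :
  (forall j', (j' < m)%nat -> forall k, F j' (stage A F u j') k = G j' (stage A F u j') k) ->
  erk_step m A b F u k = erk_step m A b G u k.
Proof.
  intros H. rewrite !step_eq. f_equal. apply sumR_ext; intros i Hi.
  rewrite H by lia. rewrite (stage_ext_on A F G u i); auto. intros; apply H; lia.
Qed.
Definition FZ (xi : nat -> Z -> R) : nat -> (Z -> R) -> Z -> R :=
  fun j y l => xi j l * (y (l - 1)%Z - y l).
Lemma FZ_apply xi j y l : FZ xi j y l = xi j l * (y (l - 1)%Z - y l).
Proof. reflexivity. Qed.

Definition eZ (i : nat) : Z -> R := fun l => if Z.eqb l (- Z.of_nat i) then 1 else 0.

Lemma stage_lin A xi U V a c j : forall l,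
  stage A (FZ xi) (fun l => a * U l + c * V l) j l = a * stage A (FZ xi) U j l + c * stage A (FZ xi) V j l.
Proof.
  induction j as [j IH] using lt_wf_ind. intro l.
  rewrite !(stage_eq _ _ _ j). cbv beta.
  rewrite (sumR_ext j (fun j' => A j j' * FZ xi j' (stage A (FZ xi) (fun l => a * U l + c * V l) j') l) (fun j' => a * (A j j' * FZ xi j' (stage A (FZ xi) U j') l) + c * (A j j' * FZ xi j' (stage A (FZ xi) V j') l))).
  - rewrite sumR_lin. ring.
  - intros i Hi. rewrite ?FZ_apply. rewrite !(IH i Hi). ring.
Qed.

Lemma step_lin m A b xi U V W a c k : (forall l, W l = a * U l + c * V l) ->
  erk_step m A b (FZ xi) W k = a * erk_step m A b (FZ xi) U k + c * erk_step m A b (FZ xi) V k.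
Proof.
  intros H. replace W with (fun l => a * U l + c * V l) by (apply functional_extensionality; intros; auto).
  rewrite !step_eq.
  rewrite (sumR_ext m (fun i => b i * FZ xi i (stage A (FZ xi) (fun l => a * U l + c * V l) i) k) (fun i => a * (b i * FZ xi i (stage A (FZ xi) U i) k) + c * (b i * FZ xi i (stage A (FZ xi) V i) k))).
  - rewrite sumR_lin. ring.
  - intros i Hi. rewrite ?FZ_apply. rewrite !stage_lin. ring.
Qed.

Lemma stage_const A xi c j : forall l, stage A (FZ xi) (fun _ => c) j l = c.
Proof.
  induction j as [j IH] using lt_wf_ind. intro l.
  rewrite (stage_eq _ _ _ j). cbv beta.
  rewrite (sumR_ext j _ (fun _ => 0)). { rewrite sumR_zero; ring. }
  intros i Hi. rewrite ?FZ_apply. rewrite !(IH i Hi). ring.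
Qed.

Lemma step_const m A b xi c k : erk_step m A b (FZ xi) (fun _ => c) k = c.
Proof.
  rewrite step_eq. rewrite (sumR_ext m _ (fun _ => 0)). { rewrite sumR_zero; ring. }
  intros i Hi. rewrite ?FZ_apply. rewrite !stage_const. ring.
Qed.

Lemma stage_local A xi U V j : forall l,
  (forall l', (l - Z.of_nat j <= l' <= l)%Z -> U l' = V l') ->
  stage A (FZ xi) U j l = stage A (FZ xi) V j l.
Proof.
  induction j as [j IH] using lt_wf_ind. intros l H.
  rewrite !(stage_eq _ _ _ j). cbv beta. f_equal; [apply H; lia|].
  apply sumR_ext; intros i Hi. rewrite ?FZ_apply.
  rewrite (IH i Hi l), (IH i Hi (l-1)%Z); auto; intros; apply H; lia.
Qed.

Lemma step_local m A b xi U V :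
  (forall l', (- Z.of_nat m <= l' <= 0)%Z -> U l' = V l') ->
  erk_step m A b (FZ xi) U 0%Z = erk_step m A b (FZ xi) V 0%Z.
Proof.
  intros H. rewrite !step_eq. f_equal; [apply H; lia|].
  apply sumR_ext; intros i Hi. rewrite ?FZ_apply.
  rewrite (stage_local A xi U V i 0%Z), (stage_local A xi U V i (0-1)%Z); auto; intros; apply H; lia.
Qed.

Lemma step_sum m A b xi n (c : nat -> R) (g : nat -> Z -> R) k :
  erk_step m A b (FZ xi) (fun l => sumR n (fun i => c i * g i l)) k
  = sumR n (fun i => c i * erk_step m A b (FZ xi) (g i) k).
Proof.
  induction n.
  - simpl. apply (step_const m A b xi 0 k).
  - simpl. rewrite (step_lin m A b xi (fun l => sumR n (fun i => c i * g i l)) (g n) _ 1 (c n)).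
    + rewrite IHn. ring.
    + intros; simpl; ring.
Qed.

Lemma stepZ_repr m A b xi U :
  erk_step m A b (FZ xi) U 0%Z = sumR (S m) (fun i => U (- Z.of_nat i)%Z * pos_poly m A b i xi).
Proof.
  rewrite (step_local m A b xi U (fun l => sumR (S m) (fun i => U (- Z.of_nat i)%Z * eZ i l))).
  - apply step_sum.
  - intros l Hl. rewrite (sumR_single _ _ (Z.to_nat (- l))).
    + unfold eZ. rewrite Z2Nat.id by lia. rewrite Z.opp_involutive, Z.eqb_refl. ring.
    + lia.
    + intros i Hi Hne. unfold eZ. destruct (Z.eqb_spec l (- Z.of_nat i)); [lia|ring].
Qed.

Lemma sumP_one m A b xi : sumR (S m) (fun i => pos_poly m A b i xi) = 1.
Proof.
  pose proof (stepZ_repr m A b xi (fun _ => 1)) as H. rewrite step_const in H.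
  rewrite H. apply sumR_ext; intros; ring.
Qed.

Lemma cp_const (c x : R) : continuity_pt (fun _ => c) x.
Proof. apply continuity_pt_const. intros ? ?; reflexivity. Qed.
Lemma cp_id (x : R) : continuity_pt (fun t => t) x.
Proof. apply derivable_continuous_pt. apply derivable_id. Qed.
Lemma cp_mult f g x : continuity_pt f x -> continuity_pt g x -> continuity_pt (fun t => f t * g t) x.
Proof. intros; exact (continuity_pt_mult f g x H H0). Qed.
Lemma cp_plus f g x : continuity_pt f x -> continuity_pt g x -> continuity_pt (fun t => f t + g t) x.
Proof. intros; exact (continuity_pt_plus f g x H H0). Qed.
Lemma cp_minus f g x : continuity_pt f x -> continuity_pt g x -> continuity_pt (fun t => f t - g t) x.
Proof. intros; exact (continuity_pt_minus f g x H H0). Qed.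

Lemma cp_sumR n (f : nat -> R -> R) x : (forall i, (i < n)%nat -> continuity_pt (f i) x) ->
  continuity_pt (fun t => sumR n (fun i => f i t)) x.
Proof.
  induction n; simpl; intros H. - apply cp_const.
  - apply cp_plus. + apply IHn; intros; apply H; lia. + apply H; lia.
Qed.

Definition sxi (xi : nat -> Z -> R) (t : R) : nat -> Z -> R := fun j l => t * xi j l.

Lemma stage_cont A xi U j : forall l x, continuity_pt (fun t => stage A (FZ (sxi xi t)) U j l) x.
Proof.
  induction j as [j IH] using lt_wf_ind. intros l x.
  replace (fun t => stage A (FZ (sxi xi t)) U j l) with
    (fun t => U l + sumR j (fun j' => A j j' * ((t * xi j' l) * (stage A (FZ (sxi xi t)) U j' (l-1)%Z - stage A (FZ (sxi xi t)) U j' l)))).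
  2:{ apply functional_extensionality; intro t. rewrite (stage_eq _ _ _ j). reflexivity. }
  apply cp_plus; [apply cp_const|].
  apply (cp_sumR j (fun j' t => A j j' * ((t * xi j' l) * (stage A (FZ (sxi xi t)) U j' (l-1)%Z - stage A (FZ (sxi xi t)) U j' l)))).
  intros i Hi. apply cp_mult; [apply cp_const|]. apply cp_mult.
  - apply cp_mult; [apply cp_id|apply cp_const].
  - apply cp_minus; apply IH; auto.
Qed.

Lemma pos_cont m A b i xi x : continuity_pt (fun t => pos_poly m A b i (sxi xi t)) x.
Proof.
  change (continuity_pt (fun t => erk_step m A b (FZ (sxi xi t)) (eZ i) 0%Z) x).
  replace (fun t => erk_step m A b (FZ (sxi xi t)) (eZ i) 0%Z) with
    (fun t => eZ i 0%Z + sumR m (fun j' => b j' * ((t * xi j' 0%Z) * (stage A (FZ (sxi xi t)) (eZ i) j' (0-1)%Z - stage A (FZ (sxi xi t)) (eZ i) j' 0%Z)))).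
  2:{ apply functional_extensionality; intro t. rewrite step_eq. reflexivity. }
  apply cp_plus; [apply cp_const|].
  apply (cp_sumR m (fun j' t => b j' * ((t * xi j' 0%Z) * (stage A (FZ (sxi xi t)) (eZ i) j' (0-1)%Z - stage A (FZ (sxi xi t)) (eZ i) j' 0%Z)))).
  intros j Hj. apply cp_mult; [apply cp_const|]. apply cp_mult.
  - apply cp_mult; [apply cp_id|apply cp_const].
  - apply cp_minus; apply stage_cont.
Qed.

Lemma cont_nonneg f : continuity_pt f 1 -> (forall t, 0 <= t < 1 -> 0 <= f t) -> 0 <= f 1.
Proof.
  intros Hc Hpos. destruct (Rle_lt_dec 0 (f 1)) as [|Hneg]; auto. exfalso.
  unfold continuity_pt, continue_in, limit1_in, limit_in in Hc.
  destruct (Hc (- f 1) ltac:(lra)) as [alp [Halp H]].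
  set (t := 1 - Rmin alp 1 / 2).
  assert (Hm1 : Rmin alp 1 <= 1) by apply Rmin_r.
  assert (Hm2 : Rmin alp 1 <= alp) by apply Rmin_l.
  assert (Hm3 : 0 < Rmin alp 1) by (apply Rmin_glb_lt; lra).
  specialize (H t). simpl in H. unfold R_dist, D_x, no_cond in H.
  assert (Ht : Rabs (f t - f 1) < - f 1).
  { apply H. split; [split; [auto|unfold t; lra]|]. rewrite Rabs_left; unfold t; lra. }
  pose proof (Hpos t ltac:(unfold t; lra)).
  apply Rabs_def2 in Ht. lra.
Qed.

Lemma pos_nonneg m A b xi M : (forall j l, 0 <= xi j l <= M) ->
  (forall j l, Rbar_le (xi j l) (gamma m A b)) ->
  forall i, (i <= m)%nat -> 0 <= pos_poly m A b i xi.
Proof.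
  intros Hb Hg i Hi.
  pose proof (Lub_Rbar_correct (pos_ok m A b)) as [Hub Hlub].
  change (Lub_Rbar (pos_ok m A b)) with (gamma m A b) in Hub, Hlub.
  pose proof (Hg 0%nat 0%Z) as Hg0. pose proof (Hb 0%nat 0%Z) as Hb0.
  destruct (gamma m A b) as [r| |] eqn:Hgam.
  - simpl in Hg0.
    replace xi with (sxi xi 1) by (apply functional_extensionality; intro j; apply functional_extensionality; intro l; unfold sxi; ring).
    apply (cont_nonneg (fun t => pos_poly m A b i (sxi xi t))); [apply pos_cont|].
    intros t Ht. cbv beta.
    assert (Hex : exists d, pos_ok m A b d /\ t * r <= d).
    { apply NNPP; intro Hn.
      assert (Hu : is_ub_Rbar (pos_ok m A b) (Finite (t * r))).
      { intros d Hd. simpl. destruct (Rle_lt_dec (t * r) d) as [Hle|Hlt]; [exfalso; apply Hn; eauto|lra]. }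
      pose proof (Hlub _ Hu) as Hle. simpl in Hle.
      assert (r = 0) by nra. subst r.
      assert (Hu2 : is_ub_Rbar (pos_ok m A b) m_infty).
      { intros d Hd. exfalso. apply Hn. exists d. split; auto. destruct Hd. lra. }
      pose proof (Hlub _ Hu2) as Hf. simpl in Hf. exact Hf. }
    destruct Hex as [d [Hd Htd]].
    destruct Hd as [_ Hd]. apply Hd; auto.
    intros j l. unfold sxi. pose proof (Hb j l). pose proof (Hg j l) as Hgl. simpl in Hgl. split; nra.
  - assert (Hex : exists d, pos_ok m A b d /\ M <= d).
    { apply NNPP; intro Hn.
      assert (Hu : is_ub_Rbar (pos_ok m A b) (Finite M)).
      { intros d Hd. simpl. destruct (Rle_lt_dec M d) as [Hle|Hlt]; [exfalso; apply Hn; eauto|lra]. }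
      pose proof (Hlub _ Hu) as Hle. simpl in Hle. exact Hle. }
    destruct Hex as [d [[_ Hd] HMd]]. apply Hd; auto.
    intros j l. pose proof (Hb j l). lra.
  - simpl in Hg0. contradiction.
Qed.

Definition idx (N k : nat) (l : Z) : nat := S (Z.to_nat ((Z.of_nat k - 1 + l) mod Z.of_nat N)).

Lemma idx_range N k l : (1 <= N)%nat -> exists r, idx N k l = S r /\ (r < N)%nat.
Proof.
  intros HN. exists (Z.to_nat ((Z.of_nat k - 1 + l) mod Z.of_nat N)). split; [reflexivity|].
  pose proof (Z.mod_pos_bound (Z.of_nat k - 1 + l) (Z.of_nat N) ltac:(lia)). lia.
Qed.

Lemma idx0 N k : (1 <= k <= N)%nat -> idx N k 0 = k.
Proof.
  intros Hk. unfold idx. rewrite Z.add_0_r, Z.mod_small by lia. lia.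
Qed.

Lemma idx_prev N k l : (1 <= N)%nat -> prevN N (idx N k l) = idx N k (l - 1).
Proof.
  intros HN. unfold idx, prevN.
  set (a := (Z.of_nat k - 1 + l)%Z).
  replace (Z.of_nat k - 1 + (l - 1))%Z with (a - 1)%Z by (unfold a; lia).
  pose proof (Z.mod_pos_bound a (Z.of_nat N) ltac:(lia)) as Hb.
  pose proof (Z.div_mod a (Z.of_nat N) ltac:(lia)) as Hd.
  set (r := (a mod Z.of_nat N)%Z) in *. set (q := (a / Z.of_nat N)%Z) in *.
  destruct (Z.eq_dec r 0) as [H0|H0].
  - rewrite H0. simpl.
    rewrite <- (Z.mod_unique (a - 1) (Z.of_nat N) (q - 1) (Z.of_nat N - 1)) by lia. lia.
  - rewrite <- (Z.mod_unique (a - 1) (Z.of_nat N) q (r - 1)) by lia.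
    destruct (Nat.eqb_spec (S (Z.to_nat r)) 1); lia.
Qed.

Definition Flin (N : nat) (C : nat -> nat -> R) : nat -> (nat -> R) -> nat -> R :=
  fun j y k => C j k * (y (prevN N k) - y k).

Lemma stage_lift A N C u k j : (1 <= N)%nat -> forall l,
  stage A (Flin N C) u j (idx N k l) = stage A (FZ (fun j l => C j (idx N k l))) (fun l => u (idx N k l)) j l.
Proof.
  intros HN. induction j as [j IH] using lt_wf_ind. intro l.
  rewrite !(stage_eq _ _ _ j). cbv beta. f_equal.
  apply sumR_ext; intros i Hi. rewrite FZ_apply. unfold Flin.
  rewrite idx_prev by auto. rewrite !(IH i Hi). reflexivity.
Qed.

Lemma one_step m A b N (xf : nat -> (nat -> R) -> nat -> R) u lo hi k :
  (1 <= N)%nat ->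
  (forall j y k, (1 <= k <= N)%nat -> 0 <= xf j y k /\ Rbar_le (xf j y k) (gamma m A b)) ->
  (forall k, (1 <= k <= N)%nat -> lo <= u k <= hi) -> (1 <= k <= N)%nat ->
  lo <= erk_step m A b (fun j y k => xf j y k * (y (prevN N k) - y k)) u k <= hi.
Proof.
  intros HN Hxf Hu Hk.
  set (Fa := fun j y k => xf j y k * (y (prevN N k) - y k)).
  set (C := fun j k => xf j (stage A Fa u j) k).
  rewrite (step_ext_on m A b Fa (Flin N C)) by (intros; reflexivity).
  set (xi := fun j l => C j (idx N k l)).
  set (U := fun l => u (idx N k l)).
  assert (E : erk_step m A b (Flin N C) u k = erk_step m A b (FZ xi) U 0%Z).
  { rewrite !step_eq. f_equal.
    - unfold U. rewrite idx0 by auto. reflexivity.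
    - apply sumR_ext; intros i Hi. rewrite FZ_apply. unfold Flin, xi, U.
      rewrite <- !stage_lift by auto. rewrite <- idx_prev by auto. rewrite idx0 by auto. reflexivity. }
  rewrite E, stepZ_repr.
  set (xi2 := fun j l => if (j <? m)%nat then xi j l else 0).
  assert (Pe : forall i, pos_poly m A b i xi = pos_poly m A b i xi2).
  { intro i. unfold pos_poly. apply step_ext_on. intros j Hj l.
    unfold xi2. destruct (Nat.ltb_spec j m); [reflexivity|lia]. }
  assert (HC : forall j k', (1 <= k' <= N)%nat -> 0 <= C j k' /\ Rbar_le (C j k') (gamma m A b)).
  { intros; apply Hxf; auto. }
  set (M := sumR m (fun j => sumR N (fun k' => C j (S k')))).
  assert (HM0 : 0 <= M).
  { apply sumR_nonneg; intros; apply sumR_nonneg; intros; apply HC; lia. }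
  assert (Hxi2 : forall j l, 0 <= xi2 j l <= M /\ Rbar_le (xi2 j l) (gamma m A b)).
  { intros j l. unfold xi2, xi. destruct (Nat.ltb_spec j m).
    - destruct (idx_range N k l HN) as [r [Hr1 Hr2]]. rewrite Hr1.
      destruct (HC j (S r) ltac:(lia)) as [H1 H2]. split; auto. split; auto.
      apply Rle_trans with (sumR N (fun k' => C j (S k'))).
      + apply (sumR_le_term N (fun k' => C j (S k'))); auto. intros; apply HC; lia.
      + apply (sumR_le_term m (fun j => sumR N (fun k' => C j (S k')))); auto.
        intros; apply sumR_nonneg; intros; apply HC; lia.
    - destruct (HC 0%nat 1%nat ltac:(lia)) as [H1 H2].
      split; [lra|]. destruct (gamma m A b); simpl in *; auto. lra. }
  assert (HP : forall i, (i < S m)%nat -> 0 <= pos_poly m A b i xi).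
  { intros i Hi. rewrite Pe. apply (pos_nonneg m A b xi2 M); [apply Hxi2|apply Hxi2|lia]. }
  pose proof (sumP_one m A b xi) as S1.
  pose proof (sumR_convex (S m) (fun i => U (- Z.of_nat i)%Z) (fun i => pos_poly m A b i xi) lo hi HP) as Hc.
  rewrite S1 in Hc. cbv beta in Hc. rewrite !Rmult_1_r in Hc. apply Hc.
  intros i Hi. unfold U. destruct (idx_range N k (- Z.of_nat i) HN) as [r [Hr1 Hr2]]. rewrite Hr1. apply Hu. lia.
Qed.

Lemma umin_umax N u k : (1 <= k <= N)%nat -> umin_of N u <= u k <= umax_of N u.
Proof.
  induction N as [|N IH]; intros Hk; [lia|].
  destruct N as [|N].
  - replace k with 1%nat by lia. simpl. lra.
  - change (umin_of (S (S N)) u) with (Rmin (umin_of (S N) u) (u (S (S N)))).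
    change (umax_of (S (S N)) u) with (Rmax (umax_of (S N) u) (u (S (S N)))).
    pose proof (Rmin_l (umin_of (S N) u) (u (S (S N)))). pose proof (Rmin_r (umin_of (S N) u) (u (S (S N)))).
    pose proof (Rmax_l (umax_of (S N) u) (u (S (S N)))). pose proof (Rmax_r (umax_of (S N) u) (u (S (S N)))).
    destruct (Nat.eq_dec k (S (S N))) as [->|]; [lra|].
    specialize (IH ltac:(lia)). lra.
Qed.

Theorem theorem1 (m : nat) (A : nat -> nat -> R) (b : nat -> R)
  (N : nat) (dx dt t0 : R) (q : nat -> (nat -> R) -> R -> R) (u0 : nat -> R) :
  (1 <= N)%nat ->
  0 < dx ->
  (forall (k : nat) (u : nat -> R) (t : R), (1 <= k <= N)%nat ->
     0 <= dt * q k u t / dx /\ Rbar_le (Finite (dt * q k u t / dx)) (gamma m A b)) ->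
  forall (n k : nat), (1 <= k <= N)%nat ->
    umin_of N u0 <= rk_sol m A b N dx dt t0 q u0 n k <= umax_of N u0.
Proof.
  intros HN Hdx Hq n. induction n as [|n IH]; intros k Hk.
  - simpl. apply umin_umax; auto.
  - change (rk_sol m A b N dx dt t0 q u0 (S n)) with
      (erk_step m A b (fun j y k => (fun j y k => dt / dx * q k y (t0 + INR n * dt + node A j * dt)) j y k * (y (prevN N k) - y k))
         (rk_sol m A b N dx dt t0 q u0 n)).
    apply one_step; auto.
    intros j y k' Hk'. replace (dt / dx * q k' y (t0 + INR n * dt + node A j * dt))
      with (dt * q k' y (t0 + INR n * dt + node A j * dt) / dx) by (field; lra).
    apply Hq; auto.
Qed.
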